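(* In the setting of fiber bundle complexes $B\otimes_\varphi F$ (with $B,F$ two-term complexes over $\mathbb{F}_2$), suppose that (1) every $\varphi(b^1,b^0)$ induces the identity on $H_0(F)$ and on $H_1(F)$; (2) $F$ has an augmentation $\epsilon:F_0\to\mathbb{F}_2$ (i.e. $\epsilon\partial^F=0$) whose induced map $H_0(F)\to\mathbb{F}_2$ is an isomorphism; (3) $H_0(B)=0$. Then the chain map $\pi_*:B\otimes_\varphi F\to B$ given by $b\otimes f\mapsto\epsilon(f)b$ on $B_1\otimes F_0$ and on $B_0\otimes F_0$, and by $0$ on $B_0\otimes F_1$ and $B_1\otimes F_1$, induces an isomorphism $H_1(B\otimes_\varphi F)\to H_1(B)$; and the map $\pi^*$ sending $\beta\in B^1=B_1^*$ to the functional on $(B\otimes_\varphi F)_1=(B_1\otimes F_0)\oplus(B_0\otimes F_1)$ given by $\beta\otimes\epsilon$ on $B_1\otimes F_0$ and $0$ on $B_0\otimes F_1$ induces an isomorphism $H^1(B)\to H^1(B\otimes_\varphi F)$.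
   Context: $\operatorname{Aut}(F)$ denotes the group of chain automorphisms of $F=(F_1\xrightarrow{\partial^F}F_0)$. $B=(B_1\xrightarrow{\partial^B}B_0)$ has distinguished bases; write $b^0\in\partial^Bb^1$ if basis vector $b^0$ appears with nonzero coefficient in $\partial^Bb^1$. A connection $\varphi$ assigns to each such pair an element $\varphi(b^1,b^0)\in\operatorname{Aut}(F)$; $\partial_\varphi(b^1\otimes f)=\sum_{b^0\in\partial^Bb^1}b^0\otimes\varphi(b^1,b^0)(f)$. $B\otimes_\varphi F$ is the total complex with degree-2,1,0 parts $B_1\otimes F_1$, $(B_1\otimes F_0)\oplus(B_0\otimes F_1)$, $B_0\otimes F_0$ and differential $\partial_\varphi+\operatorname{id}\otimes\partial^F$. Cohomology $H^i$ of a complex of finite-dimensional spaces is the homology of the dual complex with transposed differentials. *)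

(* Defs.v *)
From HB Require Import structures.
From mathcomp Require Import all_boot all_order all_algebra all_fingroup.
Set Implicit Arguments. Unset Strict Implicit. Unset Printing Implicit Defensive.
Import GRing.Theory.
Local Open Scope ring_scope.

(* All spaces are finite-dimensional with standard bases;
   vectors of a space of dimension n are row vectors 'rV_n, and the tensor
   product U (dim a) (x) V (dim b) is represented by 'M_(a,b)
   (entry (i,k) = coefficient of u_i (x) v_k). Linear maps act on the right. *)
Notation F2 := 'F_2.

(* f : V1 -> W1 induces a well-defined bijection
   ker dV1 / im dV2  -->  ker dW1 / im dW2. *)
Definition induces_homology_iso {V2 V1 V0 W2 W1 W0 : zmodType}
  (dV2 : V2 -> V1) (dV1 : V1 -> V0) (dW2 : W2 -> W1) (dW1 : W1 -> W0)
  (f : V1 -> W1) : Prop :=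
  [/\
      forall z, dV1 z = 0 -> dW1 (f z) = 0,
      forall w, exists w', f (dV2 w) = dW2 w',
      forall z, dW1 z = 0 -> exists z' w', dV1 z' = 0 /\ z = f z' + dW2 w' &
      forall z, dV1 z = 0 -> (exists w', f z = dW2 w') -> exists w, z = dV2 w].

Definition induces_identity {V2 V1 V0 : zmodType}
  (dV2 : V2 -> V1) (dV1 : V1 -> V0) (g : V1 -> V1) : Prop :=
  forall z, dV1 z = 0 -> exists w, g z - z = dV2 w.

Definition homology_vanishes {V2 V1 V0 : zmodType}
  (dV2 : V2 -> V1) (dV1 : V1 -> V0) : Prop :=
  forall z, dV1 z = 0 -> exists w, z = dV2 w.

(* Two-term complex F = (F_1 --DF--> F_0), dim F_1 = m1, dim F_0 = m0,
   f1 |-> f1 *m DF.  A chain automorphism is a pair (g1, g0) of invertible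
   matrices with g1 ; DF = DF ; g0. *)
Definition chain_aut {m1 m0 : nat} (DF : 'M[F2]_(m1, m0))
  (g : 'M[F2]_m1 * 'M[F2]_m0) : Prop :=
  [/\ g.1 \in unitmx, g.2 \in unitmx & g.1 *m DF = DF *m g.2].

(* B = (B_1 --DB--> B_0), b^1_i |-> sum_j DB i j b^0_j, so that
   b^0_j \in \partial^B b^1_i  iff  DB i j != 0.
   A connection is phi : 'I_n1 -> 'I_n0 -> Aut(F) (only the values at pairs
   with DB i j != 0 matter). *)

Section Bundle.
Variables (n1 n0 m1 m0 : nat) (DB : 'M[F2]_(n1, n0)) (DF : 'M[F2]_(m1, m0))
  (phi : 'I_n1 -> 'I_n0 -> 'M[F2]_m1 * 'M[F2]_m0) (eps : 'cV[F2]_m0).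

(* degree 2 : B_1 (x) F_1 = 'M_(n1,m1)
   degree 1 : (B_1 (x) F_0) + (B_0 (x) F_1) = 'M_(n1,m0) * 'M_(n0,m1)
   degree 0 : B_0 (x) F_0 = 'M_(n0,m0) *)

Definition dphi1 (Z : 'M[F2]_(n1, m1)) : 'M[F2]_(n0, m1) :=
  \matrix_(j < n0) \sum_(i < n1 | DB i j != 0) row i Z *m (phi i j).1.
Definition dphi0 (X : 'M[F2]_(n1, m0)) : 'M[F2]_(n0, m0) :=
  \matrix_(j < n0) \sum_(i < n1 | DB i j != 0) row i X *m (phi i j).2.

(* total differential partial_phi + id (x) partial^F (signs irrelevant in char 2) *)
Definition tot_d2 (Z : 'M[F2]_(n1, m1)) : 'M[F2]_(n1, m0) * 'M[F2]_(n0, m1) :=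
  (Z *m DF, dphi1 Z).
Definition tot_d1 (XY : 'M[F2]_(n1, m0) * 'M[F2]_(n0, m1)) : 'M[F2]_(n0, m0) :=
  dphi0 XY.1 + XY.2 *m DF.

Definition mxpair {a b : nat} (A B : 'M[F2]_(a, b)) : F2 :=
  \sum_(i < a) \sum_(k < b) A i k * B i k.
Definition pair1 (PQ XY : 'M[F2]_(n1, m0) * 'M[F2]_(n0, m1)) : F2 :=
  mxpair PQ.1 XY.1 + mxpair PQ.2 XY.2.

(* transposed differentials of the dual complex (cochains are represented in
   the dual bases, i.e. a functional is given by its values on basis vectors) *)
Definition tot_dt2 (PQ : 'M[F2]_(n1, m0) * 'M[F2]_(n0, m1)) : 'M[F2]_(n1, m1) :=
  \matrix_(i, k) pair1 PQ (tot_d2 (delta_mx i k)).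
Definition tot_dt1 (W : 'M[F2]_(n0, m0)) : 'M[F2]_(n1, m0) * 'M[F2]_(n0, m1) :=
  (\matrix_(i, k) mxpair W (tot_d1 (delta_mx i k, 0)),
   \matrix_(i, k) mxpair W (tot_d1 (0, delta_mx i k))).

Definition B_d1 (b : 'rV[F2]_n1) : 'rV[F2]_n0 := b *m DB.
Definition B_dt1 (w : 'rV[F2]_n0) : 'rV[F2]_n1 :=
  \row_i mxpair w (B_d1 (delta_mx 0 i)).

Definition pi_lower (XY : 'M[F2]_(n1, m0) * 'M[F2]_(n0, m1)) : 'rV[F2]_n1 :=
  (XY.1 *m eps)^T.
Definition pi_upper (beta : 'rV[F2]_n1) : 'M[F2]_(n1, m0) * 'M[F2]_(n0, m1) :=
  (\matrix_(i, k) (beta 0 i * eps k 0), 0).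

End Bundle.

(* zero maps from/to the zero space (used for the absent degrees) *)
Definition zero_in {a b : nat} : 'M[F2]_(0, 0) -> 'M[F2]_(a, b) := fun _ => 0.
Definition zero_out {a b : nat} : 'M[F2]_(a, b) -> 'M[F2]_(0, 0) := fun _ => 0.

(* Main.v *)
Require Import Defs.
From HB Require Import structures.
From mathcomp Require Import all_boot all_order all_algebra all_fingroup.
Import GRing.Theory.
Local Open Scope ring_scope.


Lemma F2_addrr (x : F2) : x + x = 0.
Proof. by apply/eqP; rewrite -mulr2n -mulr_natr pchar_Fp_0 ?mulr0. Qed.

Lemma F2_1 (x : F2) : x != 0 -> x = 1.
Proof. by case: x => [[|[|n]] Hn] //= _; apply/val_inj. Qed.

Lemma F2_opp (x : F2) : - x = x.
Proof. by apply/eqP; rewrite eq_sym -subr_eq0 opprK F2_addrr. Qed.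

Lemma sum_DB (n k : nat) (c : 'I_n -> F2) (v : 'I_n -> 'rV[F2]_k) :
  \sum_(i | c i != 0) v i = \sum_i c i *: v i.
Proof.
rewrite big_mkcond; apply: eq_bigr => i _.
by case: ifP => [/F2_1 -> | /negbFE/eqP ->]; rewrite ?scale1r ?scale0r.
Qed.

Lemma mxpairE (a b : nat) (A B : 'M[F2]_(a, b)) : mxpair A B = \tr (A *m B^T).
Proof.
rewrite /mxpair /mxtrace; apply: eq_bigr => i _; rewrite mxE.
by apply: eq_bigr => k _; rewrite mxE.
Qed.

Lemma mxpair_delta (a b : nat) (A : 'M[F2]_(a, b)) i k : mxpair A (delta_mx i k) = A i k.
Proof.
rewrite /mxpair (bigD1 i) //= (bigD1 k) //= !mxE !eqxx mulr1 big1 ?addr0.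
  rewrite big1 ?addr0 // => i' ni; apply: big1 => k' _.
  by rewrite mxE (negbTE ni) mulr0.
by move=> k' nk; rewrite mxE eqxx (negbTE nk) mulr0.
Qed.

Lemma mxpair_nondeg (a b : nat) (A : 'M[F2]_(a, b)) :
  (forall B, mxpair A B = 0) -> A = 0.
Proof. by move=> H; apply/matrixP => i k; rewrite -mxpair_delta H mxE. Qed.

Lemma mxpairD (a b : nat) (A B C : 'M[F2]_(a, b)) :
  mxpair A (B + C) = mxpair A B + mxpair A C.
Proof. by rewrite !mxpairE linearD /= mulmxDr mxtraceD. Qed.

Lemma mxpairZ (a b : nat) (A B : 'M[F2]_(a, b)) c :
  mxpair A (c *: B) = c * mxpair A B.
Proof. by rewrite !mxpairE linearZ /= -scalemxAr mxtraceZ. Qed.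

Lemma mxpairDl (a b : nat) (A B C : 'M[F2]_(a, b)) :
  mxpair (A + B) C = mxpair A C + mxpair B C.
Proof. by rewrite !mxpairE mulmxDl mxtraceD. Qed.

Lemma mxpair0 (a b : nat) (A : 'M[F2]_(a, b)) : mxpair A 0 = 0.
Proof. by rewrite mxpairE linear0 mulmx0 mxtrace0. Qed.

Lemma lin_ext (a b : nat) (f g : 'M[F2]_(a, b) -> F2) :
  (forall x y, f (x + y) = f x + f y) -> (forall c x, f (c *: x) = c * f x) ->
  (forall x y, g (x + y) = g x + g y) -> (forall c x, g (c *: x) = c * g x) ->
  (forall i k, f (delta_mx i k) = g (delta_mx i k)) -> forall Z, f Z = g Z.
Proof.
move=> fD fZ gD gZ H Z; rewrite (matrix_sum_delta Z).
have f0 : f 0 = 0 by have := fD 0 0; rewrite addr0 F2_addrr.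
have g0 : g 0 = 0 by have := gD 0 0; rewrite addr0 F2_addrr.
apply: (big_ind2 (fun x y => f x = g y)) => //; first by rewrite f0 g0.
  by move=> x1 x2 y1 y2 e1 e2; rewrite fD gD e1 e2.
move=> i _; apply: (big_ind2 (fun x y => f x = g y)) => //; first by rewrite f0 g0.
  by move=> x1 x2 y1 y2 e1 e2; rewrite fD gD e1 e2.
by move=> k _; rewrite fZ gZ H.
Qed.

Lemma F2_addmm (a b : nat) (M : 'M[F2]_(a, b)) : M + M = 0.
Proof. by apply/matrixP => i k; rewrite !mxE F2_addrr. Qed.

Lemma dphi1D {n1 n0 m1 m0} (DB : 'M[F2]_(n1, n0)) (phi : 'I_n1 -> 'I_n0 -> 'M[F2]_m1 * 'M[F2]_m0) A B :
  dphi1 DB phi (A + B) = dphi1 DB phi A + dphi1 DB phi B.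
Proof.
apply/row_matrixP => j; rewrite linearD /= !rowK -big_split /=.
by apply: eq_bigr => i _; rewrite linearD /= mulmxDl.
Qed.

Lemma dphi1Z {n1 n0 m1 m0} (DB : 'M[F2]_(n1, n0)) (phi : 'I_n1 -> 'I_n0 -> 'M[F2]_m1 * 'M[F2]_m0) c A :
  dphi1 DB phi (c *: A) = c *: dphi1 DB phi A.
Proof.
apply/row_matrixP => j; rewrite linearZ /= !rowK scaler_sumr.
by apply: eq_bigr => i _; rewrite linearZ /= scalemxAl.
Qed.

Lemma dphi0D {n1 n0 m1 m0} (DB : 'M[F2]_(n1, n0)) (phi : 'I_n1 -> 'I_n0 -> 'M[F2]_m1 * 'M[F2]_m0) A B :
  dphi0 DB phi (A + B) = dphi0 DB phi A + dphi0 DB phi B.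
Proof.
apply/row_matrixP => j; rewrite linearD /= !rowK -big_split /=.
by apply: eq_bigr => i _; rewrite linearD /= mulmxDl.
Qed.

Lemma dphi0Z {n1 n0 m1 m0} (DB : 'M[F2]_(n1, n0)) (phi : 'I_n1 -> 'I_n0 -> 'M[F2]_m1 * 'M[F2]_m0) c A :
  dphi0 DB phi (c *: A) = c *: dphi0 DB phi A.
Proof.
apply/row_matrixP => j; rewrite linearZ /= !rowK scaler_sumr.
by apply: eq_bigr => i _; rewrite linearZ /= scalemxAl.
Qed.

Lemma dphi00 {n1 n0 m1 m0} (DB : 'M[F2]_(n1, n0)) (phi : 'I_n1 -> 'I_n0 -> 'M[F2]_m1 * 'M[F2]_m0) :
  dphi0 DB phi 0 = 0.
Proof. by have := dphi0D DB phi 0 0; rewrite addr0 F2_addmm. Qed.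

Lemma dphi10 {n1 n0 m1 m0} (DB : 'M[F2]_(n1, n0)) (phi : 'I_n1 -> 'I_n0 -> 'M[F2]_m1 * 'M[F2]_m0) :
  dphi1 DB phi 0 = 0.
Proof. by have := dphi1D DB phi 0 0; rewrite addr0 F2_addmm. Qed.

Lemma dphi1_ker {n1 n0 m1 m0} (DB : 'M[F2]_(n1, n0)) (DF : 'M[F2]_(m1, m0))
  (phi : 'I_n1 -> 'I_n0 -> 'M[F2]_m1 * 'M[F2]_m0) Z :
  (forall i j, DB i j != 0 -> forall z : 'rV_m1, z *m DF = 0 -> z *m (phi i j).1 = z) ->
  Z *m DF = 0 -> dphi1 DB phi Z = DB^T *m Z.
Proof.
move=> H1 HZ; apply/row_matrixP => j; rewrite rowK row_mul mulmx_sum_row.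
rewrite (eq_bigr (fun i => row i Z)); last first.
  by move=> i Hij; rewrite H1 // -row_mul HZ row0.
by rewrite sum_DB; apply: eq_bigr => i _; rewrite !mxE.
Qed.

Lemma dphi0_eps {n1 n0 m1 m0} (DB : 'M[F2]_(n1, n0))
  (phi : 'I_n1 -> 'I_n0 -> 'M[F2]_m1 * 'M[F2]_m0) (eps : 'cV[F2]_m0) X :
  (forall i j, DB i j != 0 -> (phi i j).2 *m eps = eps) ->
  dphi0 DB phi X *m eps = DB^T *m (X *m eps).
Proof.
move=> H2; apply/row_matrixP => j; rewrite !row_mul rowK mulmx_suml mulmx_sum_row.
rewrite (eq_bigr (fun i => row i X *m eps)); last first.
  by move=> i Hij; rewrite -mulmxA H2.
by rewrite sum_DB; apply: eq_bigr => i _; rewrite !mxE row_mul.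
Qed.

Lemma d1d2 {n1 n0 m1 m0} (DB : 'M[F2]_(n1, n0)) (DF : 'M[F2]_(m1, m0))
  (phi : 'I_n1 -> 'I_n0 -> 'M[F2]_m1 * 'M[F2]_m0) Z :
  (forall i j, DB i j != 0 -> (phi i j).1 *m DF = DF *m (phi i j).2) ->
  tot_d1 DB DF phi (tot_d2 DB DF phi Z) = 0.
Proof.
move=> Hc; apply/row_matrixP => j; rewrite /tot_d1 /tot_d2 /= linearD /= row_mul !rowK.
rewrite mulmx_suml -big_split /= row0; apply: big1 => i Hij.
by rewrite row_mul -!mulmxA Hc // F2_addmm.
Qed.

Lemma rows_in (a b c : nat) (A : 'M[F2]_(a, c)) (D : 'M[F2]_(b, c)) :
  (forall j, exists w, row j A = w *m D) -> exists Y, A = Y *m D.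
Proof.
move=> H; have: (A <= D)%MS.
  by apply/row_subP => j; case: (H j) => w ->; apply: submxMl.
by case/submxP => Y ->; exists Y.
Qed.

Lemma ann_ker (m1 m0 p : nat) (DF : 'M[F2]_(m1, m0)) (Q : 'M[F2]_(p, m1)) :
  Q *m (kermx DF)^T = 0 -> exists W, Q = W *m DF^T.
Proof.
move=> HQ; set U := kermx DF.
have s1 : (DF^T <= kermx U^T)%MS by rewrite sub_kermx -trmx_mul mulmx_ker trmx0.
have s2 : (Q <= kermx U^T)%MS by rewrite sub_kermx HQ.
have rk : \rank (kermx U^T) = \rank DF^T.
  rewrite mxrank_ker mxrank_tr mxrank_ker mxrank_tr subKn //.
  exact: rank_leq_row.
have := (mxrank_leqif_sup s1).2; rewrite rk eqxx => /esym s3.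
by apply/submxP; apply: submx_trans s2 s3.
Qed.

Lemma ker_eps (m1 m0 p : nat) (DF : 'M[F2]_(m1, m0)) (eps : 'cV[F2]_m0) (e0 : 'rV[F2]_m0) :
  e0 *m eps = 1 -> (forall f0 : 'rV_m0, f0 *m eps = 0 -> exists w, f0 = w *m DF) ->
  forall P : 'M[F2]_(p, m0), P *m DF^T = 0 -> P = (P *m e0^T) *m eps^T.
Proof.
move=> He0 Hinj P HP.
set M := 1%:M - eps *m e0.
have HM : M *m eps = 0 by rewrite mulmxBl mul1mx -mulmxA He0 mulmx1 subrr.
have [Wm EM] : exists Wm, M = Wm *m DF.
  by apply: rows_in => k; apply: Hinj; rewrite -row_mul HM row0.
have : P *m M^T = 0 by rewrite EM trmx_mul mulmxA HP mul0mx.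
rewrite /M linearB /= trmx1 mulmxBr mulmx1 trmx_mul mulmxA.
by move/eqP; rewrite subr_eq0 => /eqP.
Qed.

Lemma mxpair0l (a b : nat) (B : 'M[F2]_(a, b)) : mxpair 0 B = 0.
Proof. by rewrite mxpairE mul0mx mxtrace0. Qed.

Lemma mxpairNl (a b : nat) (A B : 'M[F2]_(a, b)) : mxpair (- A) B = - mxpair A B.
Proof. by rewrite !mxpairE mulNmx linearN. Qed.

Lemma mxpairT1 (p q r : nat) (A : 'M[F2]_(p, q)) (M : 'M[F2]_(r, q)) (B : 'M[F2]_(p, r)) :
  mxpair (A *m M^T) B = mxpair A (B *m M).
Proof. by rewrite !mxpairE trmx_mul mulmxA. Qed.

Lemma mxpairT2 (n m : nat) (u : 'rV[F2]_n) (v : 'cV[F2]_m) (M : 'M[F2]_(n, m)) :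
  mxpair (u^T *m v^T) M = mxpair u ((M *m v)^T).
Proof.
rewrite !mxpairE trmxK -mulmxA mxtrace_mulC -mxtrace_tr !trmx_mul !trmxK.
by rewrite mulmxA.
Qed.

Lemma pi_upperE n1 n0 m1 m0 (eps : 'cV[F2]_m0) (beta : 'rV[F2]_n1) :
  pi_upper n0 m1 eps beta = (beta^T *m eps^T, 0).
Proof. by congr pair; apply/matrixP => i k; rewrite !mxE big_ord1 !mxE. Qed.

Lemma A1 {n1 n0 m1 m0} (DB : 'M[F2]_(n1, n0)) (DF : 'M[F2]_(m1, m0))
  (phi : 'I_n1 -> 'I_n0 -> 'M[F2]_m1 * 'M[F2]_m0) PQ Z :
  mxpair (tot_dt2 DB DF phi PQ) Z = pair1 PQ (tot_d2 DB DF phi Z).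
Proof.
apply: (@lin_ext _ _ _ (fun Z => pair1 PQ (tot_d2 DB DF phi Z))).
- by move=> *; rewrite mxpairD.
- by move=> *; rewrite mxpairZ.
- by move=> x y; rewrite /pair1 /tot_d2 /= mulmxDl dphi1D !mxpairD addrACA.
- by move=> c x; rewrite /pair1 /tot_d2 /= -scalemxAl dphi1Z !mxpairZ mulrDr.
- by move=> i k; rewrite mxpair_delta /tot_dt2 mxE.
Qed.

Lemma A2a {n1 n0 m1 m0} (DB : 'M[F2]_(n1, n0)) (DF : 'M[F2]_(m1, m0))
  (phi : 'I_n1 -> 'I_n0 -> 'M[F2]_m1 * 'M[F2]_m0) W X :
  mxpair (tot_dt1 DB DF phi W).1 X = mxpair W (dphi0 DB phi X).
Proof.
apply: (@lin_ext _ _ _ (fun X => mxpair W (dphi0 DB phi X))).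
- by move=> *; rewrite mxpairD.
- by move=> *; rewrite mxpairZ.
- by move=> x y; rewrite dphi0D mxpairD.
- by move=> c x; rewrite dphi0Z mxpairZ.
- by move=> i k; rewrite mxpair_delta /tot_dt1 mxE /tot_d1 /= mul0mx addr0.
Qed.

Lemma A2b {n1 n0 m1 m0} (DB : 'M[F2]_(n1, n0)) (DF : 'M[F2]_(m1, m0))
  (phi : 'I_n1 -> 'I_n0 -> 'M[F2]_m1 * 'M[F2]_m0) W :
  (tot_dt1 DB DF phi W).2 = W *m DF^T.
Proof.
apply/matrixP => j k; rewrite mxE /tot_d1 /= dphi00 add0r -mxpair_delta.
by rewrite mxpairT1.
Qed.

Lemma A3 {n1 n0} (DB : 'M[F2]_(n1, n0)) w b :
  mxpair (B_dt1 DB w) b = mxpair w (b *m DB).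
Proof.
apply: (@lin_ext _ _ _ (fun b => mxpair w (b *m DB))).
- by move=> *; rewrite mxpairD.
- by move=> *; rewrite mxpairZ.
- by move=> x y; rewrite mulmxDl mxpairD.
- by move=> c x; rewrite -scalemxAl mxpairZ.
- by move=> i k; rewrite (ord1 i) mxpair_delta /B_dt1 mxE.
Qed.

Theorem mainTheorem3 (n1 n0 m1 m0 : nat)
  (DB : 'M[F2]_(n1, n0)) (DF : 'M[F2]_(m1, m0))
  (phi : 'I_n1 -> 'I_n0 -> 'M[F2]_m1 * 'M[F2]_m0) (eps : 'cV[F2]_m0) :
  (forall i j, DB i j != 0 -> chain_aut DF (phi i j)) ->
  (forall i j, DB i j != 0 ->
     induces_identity (fun f1 : 'rV[F2]_m1 => f1 *m DF)
                      (@zero_out 1 m0) (fun f0 => f0 *m (phi i j).2) /\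
     induces_identity (@zero_in 1 m1)
                      (fun f1 : 'rV[F2]_m1 => f1 *m DF) (fun f1 => f1 *m (phi i j).1)) ->
  DF *m eps = 0 ->
  induces_homology_iso (fun f1 : 'rV[F2]_m1 => f1 *m DF) (@zero_out 1 m0)
                       (@zero_in 1 1) (@zero_out 1 1)
                       (fun f0 : 'rV[F2]_m0 => f0 *m eps) ->
  homology_vanishes (B_d1 DB) (@zero_out 1 n0) ->
  induces_homology_iso (tot_d2 DB DF phi) (tot_d1 DB DF phi)
                       (@zero_in 1 n1) (B_d1 DB) (@pi_lower n1 n0 m1 m0 eps)
  /\
  induces_homology_iso (B_dt1 DB) (@zero_out 1 n1)
                       (tot_dt1 DB DF phi) (tot_dt2 DB DF phi) (@pi_upper n1 n0 m1 m0 eps).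
Proof.
move=> H0 H1 Heps0 [_ _ Hsurj Hinj] H3.
have Hc : forall i j, DB i j != 0 -> (phi i j).1 *m DF = DF *m (phi i j).2.
  by move=> i j Hij; case: (H0 i j Hij).
have H1' : forall i j, DB i j != 0 -> forall z : 'rV_m1, z *m DF = 0 -> z *m (phi i j).1 = z.
  move=> i j Hij z Hz; case: ((H1 i j Hij).2 z Hz) => w.
  by rewrite /zero_in => /eqP; rewrite subr_eq0 => /eqP.
have H2' : forall i j, DB i j != 0 -> (phi i j).2 *m eps = eps.
  move=> i j Hij; apply/row_matrixP => k; rewrite row_mul !rowE.
  case: ((H1 i j Hij).1 (delta_mx 0 k) erefl) => w Hw.
  apply/eqP; rewrite -subr_eq0 -mulmxBl Hw -mulmxA Heps0 mulmx0 //.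
have [e0 He0] : exists e0 : 'rV_m0, e0 *m eps = 1.
  case: (Hsurj 1 erefl) => z' [w' [_ ->]]; exists z'.
  by rewrite /zero_in addr0.
have Hinj' : forall f0 : 'rV_m0, f0 *m eps = 0 -> exists w, f0 = w *m DF.
  by move=> f0 Hf0; apply: Hinj => //; exists 0.
have [C HC] : exists C : 'M_(n0, n1), 1%:M = C *m DB.
  by apply: rows_in => j; apply: H3.
split.
- split.
  + move=> [X Y] /= Hz; rewrite /B_d1 /pi_lower /=.
    have := congr1 (mulmx^~ eps) Hz; rewrite /tot_d1 /= mul0mx mulmxDl -mulmxA Heps0.
    rewrite mulmx0 addr0 dphi0_eps // => E.
    by rewrite -[DB]trmxK -trmx_mul E trmx0.
  + move=> Z; exists 0; rewrite /pi_lower /tot_d2 /zero_in /=.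
    by rewrite -mulmxA Heps0 mulmx0 trmx0.
  + move=> z Hz; rewrite /B_d1 in Hz.
    set X := z^T *m e0.
    have XE : X *m eps = z^T by rewrite /X -mulmxA He0 mulmx1.
    have [Y0 EY] : exists Y0, dphi0 DB phi X = Y0 *m DF.
      apply: rows_in => j; apply: Hinj'.
      by rewrite -row_mul dphi0_eps // XE -trmx_mul Hz trmx0 row0.
    exists (X, Y0); exists 0; split.
      by rewrite /tot_d1 /= EY F2_addmm.
    by rewrite /pi_lower /zero_in /= XE trmxK addr0.
  + move=> [X Y] /= Hz [w' Hw]; rewrite /pi_lower /zero_in /= in Hw.
    have XE : X *m eps = 0 by rewrite -[X *m eps]trmxK Hw trmx0.
    have [Z0 EX] : exists Z0, X = Z0 *m DF.
      by apply: rows_in => i; apply: Hinj'; rewrite -row_mul XE row0.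
    set Y' := Y - dphi1 DB phi Z0.
    have HY' : Y' *m DF = 0.
      have := d1d2 DB DF phi Z0 Hc; rewrite /tot_d1 /tot_d2 /= => E1.
      rewrite /tot_d1 /= EX in Hz.
      rewrite /Y' mulmxBl; apply/eqP; rewrite subr_eq0; apply/eqP.
      by rewrite -(addr0_eq Hz) -(addr0_eq E1).
    exists (Z0 + C^T *m Y'); rewrite /tot_d2; congr pair.
      by rewrite mulmxDl -mulmxA HY' mulmx0 addr0 EX.
    rewrite dphi1D (@dphi1_ker _ _ _ _ DB DF phi (C^T *m Y') H1'); last by rewrite -mulmxA HY' mulmx0.
    by rewrite mulmxA -trmx_mul -HC trmx1 mul1mx /Y' addrC subrK.
- split.
  + move=> beta _; apply: mxpair_nondeg => Z.
    rewrite A1 pi_upperE /pair1 /tot_d2 /= mxpair0l addr0 mxpairT2.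
    by rewrite -mulmxA Heps0 mulmx0 trmx0 mxpair0.
  + move=> w; exists (w^T *m eps^T).
    rewrite pi_upperE [tot_dt1 _ _ _ _]surjective_pairing A2b; congr pair.
      apply/eqP; rewrite -subr_eq0; apply/eqP; apply: mxpair_nondeg => X.
      rewrite mxpairDl mxpairNl A2a !mxpairT2 A3 dphi0_eps // [(DB^T *m _)^T]trmx_mul trmxK.
      by rewrite subrr.
    by rewrite -mulmxA -trmx_mul Heps0 trmx0 mulmx0.
  + move=> [P Q] HPQ.
    have HQ : Q *m (kermx DF)^T = 0.
      apply: mxpair_nondeg => K; rewrite mxpairT1.
      set Z'' := K *m kermx DF.
      have HZ : Z'' *m DF = 0 by rewrite -mulmxA mulmx_ker mulmx0.
      have := A1 DB DF phi (P, Q) (C^T *m Z'').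
      rewrite HPQ mxpair0l /pair1 /tot_d2 /= -mulmxA HZ mulmx0 mxpair0 add0r.
      rewrite (@dphi1_ker _ _ _ _ DB DF phi (C^T *m Z'') H1'); last first.
        by rewrite -mulmxA HZ mulmx0.
      by rewrite mulmxA -trmx_mul -HC trmx1 mul1mx => /esym.
    have [W0 EQ] := @ann_ker _ _ _ DF Q HQ.
    set T1 := (tot_dt1 DB DF phi W0).1.
    set P' := P - T1.
    have HP' : P' *m DF^T = 0.
      apply: mxpair_nondeg => Z; rewrite mxpairT1 /P' mxpairDl mxpairNl.
      have E1 := A1 DB DF phi (P, Q) Z.
      rewrite HPQ mxpair0l /pair1 /tot_d2 /= in E1.
      have E3 : mxpair T1 (Z *m DF) + mxpair Q (dphi1 DB phi Z) = 0.
        rewrite EQ mxpairT1 /T1 A2a -mxpairD.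
        by have := congr1 (mxpair W0) (d1d2 DB DF phi Z Hc); rewrite mxpair0.
      have Ea := addr0_eq (esym E1); have Et := addr0_eq E3.
      by rewrite -[mxpair P _]opprK Ea -Et opprK subrr.
    have EP := ker_eps _ _ _ DF _ _ He0 Hinj' _ HP'.
    exists ((P' *m e0^T)^T), W0; split => //.
    rewrite pi_upperE trmxK -EP [tot_dt1 _ _ _ W0]surjective_pairing A2b -EQ.
    have -> : (P', 0) + (T1, Q) = (P' + T1, 0 + Q) by []. by rewrite /P' subrK add0r.
  + move=> beta _ [W EW].
    have E2 := congr1 snd EW; rewrite pi_upperE A2b /= in E2.
    have EW0 := ker_eps _ _ _ DF _ _ He0 Hinj' _ (esym E2).
    set u := (W *m e0^T)^T.
    have Wu : W *m e0^T = u^T by rewrite /u trmxK.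
    exists u; apply/eqP; rewrite -subr_eq0; apply/eqP; apply: mxpair_nondeg => b.
    have E1 : beta^T *m eps^T = (tot_dt1 DB DF phi W).1 by rewrite -EW pi_upperE.
    rewrite mxpairDl mxpairNl.
    set X := b^T *m e0.
    have XE : X *m eps = b^T by rewrite /X -mulmxA He0 mulmx1.
    have : mxpair beta b = mxpair (tot_dt1 DB DF phi W).1 X.
      by rewrite -E1 mxpairT2 XE trmxK.
    rewrite A2a EW0 Wu mxpairT2 dphi0_eps // XE trmx_mul !trmxK -A3 => ->.
    by rewrite subrr.
Qed.
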